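(* Let $C\subseteq\mathbb{F}_q^n$ be a linear code, $t\ge 0$ an integer, and $A,B\subseteq\mathbb{F}_q^n$ linear codes satisfying $A*B\subseteq C^\perp$, $\dim A>t$, $\mathrm{d}(A^\perp)>t$ and $\mathrm{d}(A)+\mathrm{d}(C)>n$. Let $\mathbf{y}=\mathbf{c}+\mathbf{e}$ with $\mathbf{c}\in C$, $\mathrm{w}(\mathbf{e})=t$, $I_{\mathbf{e}}=\mathrm{supp}(\mathbf{e})$, and let $M=M_1\cap M_2$ where $M_1=\{\mathbf{a}\in A\mid \langle \mathbf{a}*\mathbf{y},\mathbf{b}\rangle=0\ \forall \mathbf{b}\in B\}$ and $M_2=\{\mathbf{a}\in A\mid \langle \mathbf{a}*\mathbf{y}^2,\mathbf{v}\rangle=0\ \forall \mathbf{v}\in (B^{\perp}*C)^{\perp}\}$. If $A(I_{\mathbf{e}})=M$, then $\dim B+\dim (B^\perp*C)^\perp\ge t$.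
   Context: All codes are $\mathbb{F}_q$-linear subspaces of $\mathbb{F}_q^n$. $\mathbf{u}*\mathbf{v}=(u_1v_1,\dots,u_nv_n)$, $\mathbf{u}^i=(u_1^i,\dots,u_n^i)$; $A*B$ is the span of all $\mathbf{a}*\mathbf{b}$; $\langle\mathbf{u},\mathbf{v}\rangle=\sum_iu_iv_i$, $X^\perp$ the dual. $\mathrm{w}$ Hamming weight, $\mathrm{d}$ minimum distance, $\mathrm{supp}(\mathbf{x})=\{i:x_i\ne0\}$. For $J\subseteq\{1,\dots,n\}$, $A(J)=\{\mathbf{a}\in A: a_j=0\ \forall j\in J\}\subseteq\mathbb{F}_q^n$. *)

(* Defs.v *)
From HB Require Import structures.
From mathcomp Require Import all_boot all_order all_algebra.
Set Implicit Arguments. Unset Strict Implicit. Unset Printing Implicit Defensive.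
Import GRing.Theory.
Local Open Scope ring_scope.

Section Codes.
Variables (F : finFieldType) (n : nat).
Notation vec := 'rV[F]_n.

Definition star (u v : vec) : vec := \row_i (u 0 i * v 0 i).

Definition dotp (u v : vec) : F := \sum_i u 0 i * v 0 i.

Definition supp (x : vec) : {set 'I_n} := [set i | x 0 i != 0].
Definition wt (x : vec) : nat := #|supp x|.

(* minimum distance; by convention d({0}) = n+1 (i.e. larger than n) *)
Definition mindist (C : {vspace vec}) : nat :=
  \big[minn/n.+1]_(c : vec | (c \in C) && (c != 0)) wt c.

Definition starsp (A B : {vspace vec}) : {vspace vec} :=
  <<[seq star p.1 p.2 | p in [pred p : vec * vec | (p.1 \in A) && (p.2 \in B)]]>>%VS.

Definition dual (C : {vspace vec}) : {vspace vec} :=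
  <<[seq x | x in [pred x : vec | [forall c : vec, (c \in C) ==> (dotp x c == 0%R)]]]>>%VS.

Definition shortened (A : {vspace vec}) (J : {set 'I_n}) : {set vec} :=
  [set a | (a \in A) && [forall j in J, a 0 j == 0]].

End Codes.

(* Main.v *)
Require Import Defs.
From mathcomp Require Import all_boot all_order all_algebra.
From mathcomp Require Import zify.
Import GRing.Theory.
Local Open Scope ring_scope.

Set Implicit Arguments.
Unset Strict Implicit.
Section Helpers.
Variables (F : finFieldType) (n : nat).
Notation vec := 'rV[F]_n.

Lemma dotp_sumr (m : nat) (w : vec) (c : 'I_m -> F) (v : 'I_m -> vec) :
  dotp w (\sum_i c i *: v i) = \sum_i c i * dotp w (v i).
Proof.
rewrite /dotp.
under eq_bigr => j _ do rewrite summxE mulr_sumr.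
rewrite exchange_big /=; apply: eq_bigr => i _.
rewrite mulr_sumr; apply: eq_bigr => j _; rewrite mxE; by rewrite mulrCA.
Qed.

Lemma orth_vbasis (U : {vspace vec}) (w : vec) :
  (forall i : 'I_(\dim U), dotp w (vbasis U)`_i = 0) ->
  forall b, b \in U -> dotp w b = 0.
Proof.
move=> H b bU; rewrite (coord_vbasis bU) dotp_sumr.
by rewrite big1 // => i _; rewrite H mulr0.
Qed.

Lemma mem_dual (C : {vspace vec}) (x : vec) :
  (forall c, c \in C -> dotp x c = 0) -> x \in dual C.
Proof.
move=> H; rewrite /dual; apply: memv_span.
apply/imageP; exists x => //; rewrite inE; apply/forallP => c; apply/implyP => cC.
by rewrite H.
Qed.

Lemma mindist_le (C : {vspace vec}) (x : vec) :
  x \in C -> x != 0 -> (mindist C <= wt x)%N.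
Proof.
move=> xC x0; rewrite /mindist.
have Px : (x \in C) && (x != 0) by rewrite xC x0.
move: (mem_index_enum x); elim: (index_enum _) => [//|h r IH].
rewrite inE big_cons; case/orP => [/eqP <-|xr].
  by rewrite Px geq_minl.
case: ifP => _; last exact: IH.
by rewrite geq_min IH // orbT.
Qed.

Definition genmx (U : {vspace vec}) : 'M[F]_(\dim U, n) :=
  \matrix_(r < \dim U) (vbasis U)`_r.

Lemma genmx_mem (U : {vspace vec}) (l : 'rV_(\dim U)) : l *m genmx U \in U.
Proof.
rewrite mulmx_sum_row; apply: rpred_sum => i _; apply: rpredZ.
rewrite rowK; apply: vbasis_mem; apply: mem_nth; by rewrite size_tuple.
Qed.

Definition Nmat {k : nat} (G : 'M[F]_(k, n)) (w : vec) (m : nat) (bs : seq vec) :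
  'M[F]_(k, m) := \matrix_(r < k, i < m) dotp (star (row r G) w) bs`_i.

Lemma NmatE (k : nat) (G : 'M[F]_(k, n)) (w : vec) (m : nat) (bs : seq vec)
  (l : 'rV_k) (i : 'I_m) :
  (l *m Nmat G w m bs) 0 i = dotp (star (l *m G) w) bs`_i.
Proof.
rewrite !mxE /dotp.
under eq_bigr => r _ do rewrite mxE mulr_sumr.
rewrite exchange_big /=; apply: eq_bigr => j _.
rewrite !mxE mulr_suml mulr_suml; apply: eq_bigr => r _.
by rewrite !mxE !mulrA.
Qed.


Definition selT (S : {set 'I_n}) : 'M[F]_(n, #|S|) :=
  \matrix_(j, i) (j == enum_val i)%:R.

Lemma selTE (S : {set 'I_n}) (a : vec) i : (a *m selT S) 0 i = a 0 (enum_val i).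
Proof.
rewrite mxE (bigD1 (enum_val i)) //= mxE eqxx mulr1 big1 ?addr0 //.
by move=> j /negbTE nj; rewrite mxE nj mulr0.
Qed.


Lemma selT_out (S : {set 'I_n}) (u : 'rV_#|S|) j :
  j \notin S -> (u *m (selT S)^T) 0 j = 0.
Proof.
move=> jS; rewrite mxE big1 // => i _; rewrite !mxE.
case: eqP => [ej|]; last by rewrite mulr0.
by move: jS; rewrite ej enum_valP.
Qed.

Lemma selT_in (S : {set 'I_n}) (u : 'rV_#|S|) i :
  (u *m (selT S)^T) 0 (enum_val i) = u 0 i.
Proof.
rewrite mxE (bigD1 i) //= !mxE eqxx mulr1 big1 ?addr0 //.
move=> i' ni; rewrite !mxE; case: eqP => [/enum_val_inj e|]; last by rewrite mulr0.
by rewrite e eqxx in ni.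
Qed.

End Helpers.

Theorem theorem3p6 (F : finFieldType) (n t : nat)
    (A B C : {vspace 'rV[F]_n}) (c e : 'rV[F]_n) :
  (starsp A B <= dual C)%VS ->
  (t < \dim A)%N ->
  (t < mindist (dual A))%N ->
  (n < mindist A + mindist C)%N ->
  c \in C ->
  wt e = t ->
  let y := c + e in
  let M1 := [set a | (a \in A) &&
               [forall b : 'rV[F]_n, (b \in B) ==> (dotp (star a y) b == 0)]] in
  let M2 := [set a | (a \in A) &&
               [forall v : 'rV[F]_n, (v \in dual (starsp (dual B) C)) ==>
                                      (dotp (star a (star y y)) v == 0)]] in
  shortened A (supp e) = M1 :&: M2 ->
  (t <= \dim B + \dim (dual (starsp (dual B) C)))%N.
Proof.
move=> _ _ hdA _ _ hwt y M1 M2 hM.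
set V := dual (starsp (dual B) C).
set GA := genmx A.
set T := selT F (supp e).
set X := GA *m T.
set N := row_mx (Nmat GA y (\dim B) (vbasis B)) (Nmat GA (star y y) (\dim V) (vbasis V)).
have rX : \rank X = t.
  rewrite -mxrank_tr /X trmx_mul.
  have /eqP -> : row_free (T^T *m GA^T); last by rewrite -hwt.
  apply: inj_row_free => u hu.
  set x := u *m T^T.
  have xA : x \in dual A.
    apply: mem_dual; apply: orth_vbasis => r.
    move/rowP/(_ r): hu; rewrite mulmxA -/x mxE [RHS]mxE => <-.
    by apply: eq_bigr => j _; rewrite !mxE.
  have x0 : x = 0.
    apply/eqP; apply: contraT => xn0.
    have := mindist_le xA xn0.
    have : (wt x <= t)%N.
      rewrite -hwt; apply: subset_leq_card; apply/subsetP => j.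
      rewrite !inE; apply: contraR => je.
      by rewrite /x selT_out // inE.
    move=> h1 h2; move: hdA; lia.
  apply/rowP => i; rewrite mxE -(selT_in u) -/x x0 mxE //.
have hsub : (kermx N <= kermx X)%MS.
  apply/row_subP => r.
  set l := row r (kermx N).
  have : l *m N = 0 by apply/sub_kermxP; rewrite row_sub.
  rewrite mul_mx_row => /eqP; rewrite row_mx_eq0 => /andP [/eqP h1 /eqP h2].
  have aM : l *m GA \in M1 :&: M2.
    rewrite !inE genmx_mem /=; apply/andP; split; apply/forallP => b; apply/implyP => bB;
      apply/eqP; move: b bB; apply: orth_vbasis => i.
      by move/rowP/(_ i): h1; rewrite NmatE mxE.
    by move/rowP/(_ i): h2; rewrite NmatE mxE.
  move: aM; rewrite -hM inE => /andP [_ /forallP ha].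
  apply/sub_kermxP; rewrite /X mulmxA; apply/rowP => i.
  rewrite selTE [RHS]mxE; have := ha (enum_val i); rewrite enum_valP => /eqP //.
have := mxrankS hsub; rewrite !mxrank_ker rX.
have := rank_leq_col N; have := rank_leq_row X; rewrite rX.
lia.
Qed.
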